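(* Let $\mathcal T$ be the topograph of a binary quadratic form of discriminant $D$, and let $V$ be a vertex of $\mathcal T$ with adjacent region labels $r,s,t$ (nonzero), where the edge between the regions labelled $r$ and $t$ is oriented into $V$ with label $e=s-r-t$, and the other two edges are oriented out of $V$: the edge between $r$ and $s$ with label $f=r+s-t$ and the edge between $s$ and $t$ with label $g=s+t-r$. If $D<0$, then for suitable branches of $\arcsin$ and $\arctan$, \[ \arcsin\!\Big(\tfrac{e}{rt}\cdot\tfrac{\sqrt{-D}}{2}\Big)=\arcsin\!\Big(\tfrac{f}{rs}\cdot\tfrac{\sqrt{-D}}{2}\Big)+\arcsin\!\Big(\tfrac{g}{st}\cdot\tfrac{\sqrt{-D}}{2}\Big),\qquad \arctan\!\Big(\tfrac{\sqrt{-D}}{e}\Big)=\arctan\!\Big(\tfrac{\sqrt{-D}}{f}\Big)+\arctan\!\Big(\tfrac{\sqrt{-D}}{g}\Big). \] If $D>0$, then \[ \operatorname{arcsinh}\!\Big(\tfrac{e}{rt}\cdot\tfrac{\sqrt{D}}{2}\Big)=\operatorname{arcsinh}\!\Big(\tfrac{f}{rs}\cdot\tfrac{\sqrt{D}}{2}\Big)+\operatorname{arcsinh}\!\Big(\tfrac{g}{st}\cdot\tfrac{\sqrt{D}}{2}\Big),\qquad \operatorname{arctanh}\!\Big(\tfrac{\sqrt{D}}{e}\Big)=\operatorname{arctanh}\!\Big(\tfrac{\sqrt{D}}{f}\Big)+\operatorname{arctanh}\!\Big(\tfrac{\sqrt{D}}{g}\Big). \]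
   Context: The topograph of a binary quadratic form $q$: a planar trivalent tree whose vertices are superbases $\{v_1,v_2,v_3\}$ of $\mathbb Z^2$ ($v_1+v_2+v_3=0$, $\{v_1,v_2\}$ a basis, up to overall sign), whose complementary regions correspond to pairs $\pm v$ of primitive vectors labelled $q(v)$. At a vertex, the label of an edge oriented outward between regions labelled $x,y$, with third region at the vertex labelled $z$, is $x+y-z$; reversing orientation negates the label. The discriminant $D$ of $q$ equals $-(e'f'+f'g'+g'e')$ where $e',f',g'$ are the three outgoing edge labels at any vertex. *)

(* Defs.v *)
From Stdlib Require Import Reals ZArith.
From Coquelicot Require Import Coquelicot.

Definition qform (a b c : Z) (x y : Z) : Z := (a * x * x + b * x * y + c * y * y)%Z.

Definition bqf_disc (a b c : Z) : Z := (b * b - 4 * a * c)%Z.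

(* (x1,y1), (x2,y2) is a basis of Z^2; together with v3 = -(v1+v2) it forms a
   superbase {v1,v2,v3}, i.e. a vertex of the topograph. *)
Definition is_basis (x1 y1 x2 y2 : Z) : Prop :=
  (x1 * y2 - x2 * y1)%Z = 1%Z \/ (x1 * y2 - x2 * y1)%Z = (-1)%Z.

(* A (real) branch value of arctan(y/x): an angle th with tan th = y/x; when
   x = 0 the value y/x is infinite and th must satisfy cos th = 0. *)
Definition arctan_branch (y x th : R) : Prop :=
  (x <> 0%R -> cos th <> 0%R /\ tan th = (y / x)%R) /\ (x = 0%R -> cos th = 0%R).

Definition Cexp (z : C) : C :=
  (exp (Re z) * cos (Im z), exp (Re z) * sin (Im z))%R.
Definition Csinh (z : C) : C := ((Cexp z - Cexp (- z)) / 2)%C.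
Definition Ccosh (z : C) : C := ((Cexp z + Cexp (- z)) / 2)%C.

Definition arcsinh_branch (u : R) (w : C) : Prop := Csinh w = RtoC u.

(* A (complex) branch value of arctanh(y/x): any w with tanh w = y/x; when
   x = 0 the value is infinite, i.e. cosh w = 0. *)
Definition arctanh_branch (y x : R) (w : C) : Prop :=
  (x <> 0%R -> Ccosh w <> RtoC 0 /\ Csinh w = (RtoC (y / x) * Ccosh w)%C) /\
  (x = 0%R -> Ccosh w = RtoC 0).

(* Main.v *)
Require Import Defs.
From Stdlib Require Import Reals ZArith Lra Psatz.
From Coquelicot Require Import Coquelicot.
Open Scope R_scope.

Lemma angle_ex x y : x*x + y*y = 1 -> exists th, cos th = x /\ sin th = y.
Proof.
intros H. assert (Hb: -1 <= x <= 1) by nra.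
destruct (Rle_or_lt 0 y) as [Hy|Hy].
- exists (acos x). split. apply cos_acos; auto. rewrite sin_acos; auto.
  replace (1 - x²) with (y*y) by (unfold Rsqr; lra). apply sqrt_square; auto.
- exists (- acos x). rewrite cos_neg, sin_neg, cos_acos, sin_acos; auto. split; auto.
  replace (1 - x²) with ((-y)*(-y)) by (unfold Rsqr; lra). rewrite sqrt_square; lra.
Qed.

Lemma angle_ex2 x y : 0 < x*x+y*y -> exists th l, 0 < l /\ cos th = l*x /\ sin th = l*y.
Proof.
intros H. set (rho := sqrt (x*x+y*y)).
assert (Hr: 0 < rho) by (apply sqrt_lt_R0; auto).
assert (Hrr: rho * rho = x*x+y*y) by (apply sqrt_sqrt; lra).
destruct (angle_ex (x/rho) (y/rho)) as [th [H1 H2]].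
{ replace (x / rho * (x / rho) + y / rho * (y / rho)) with ((x*x+y*y)/(rho*rho)) by (field; lra).
  rewrite Hrr. field. lra. }
exists th, (/rho). split. apply Rinv_0_lt_compat; auto. split.
rewrite H1. unfold Rdiv; ring. rewrite H2. unfold Rdiv; ring.
Qed.

Lemma arctan_of th l x y : l <> 0 -> cos th = l*x -> sin th = l*y -> arctan_branch y x th.
Proof.
intros Hl Hc Hs. unfold arctan_branch. split.
- intros Hx. split. rewrite Hc. apply Rmult_integral_contrapositive; auto.
  unfold tan. rewrite Hc, Hs. field; auto.
- intros Hx. rewrite Hc, Hx. ring.
Qed.

Open Scope C_scope.
Lemma Cexp_add z1 z2 : Cexp (z1 + z2) = Cexp z1 * Cexp z2.
Proof.
destruct z1 as [x1 y1], z2 as [x2 y2]. unfold Cexp, Cmult, Cplus; simpl.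
rewrite exp_plus, cos_plus, sin_plus. f_equal; ring.
Qed.

Lemma Cexp_opp_mul z : Cexp (- z) * Cexp z = 1.
Proof.
destruct z as [x y]. unfold Cexp, Cmult, Copp; simpl.
rewrite cos_neg, sin_neg.
assert (E: (exp (-x) * exp x = 1)%R) by (rewrite <- exp_plus; replace (-x+x)%R with 0%R by ring; apply exp_0).
apply injective_projections; simpl.
- transitivity (exp (-x) * exp x * (cos y * cos y + sin y * sin y))%R. ring.
  rewrite E. pose proof (sin2_cos2 y). unfold Rsqr in H. lra.
- ring.
Qed.

Lemma Cexp_nz z : Cexp z <> 0.
Proof.
intros H. pose proof (Cexp_opp_mul z). rewrite H, Cmult_0_r in H0. apply C1_nz. auto.
Qed.

Lemma Cexp_opp z : Cexp (- z) = / Cexp z.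
Proof.
rewrite <- (Cmult_1_l (/ Cexp z)), <- (Cexp_opp_mul z). field. apply Cexp_nz.
Qed.

Lemma C2_nz : (2 : C) <> 0.
Proof. intros H. apply (f_equal Re) in H. simpl in H. lra. Qed.

Lemma Cexp_onto (P : C) : P <> 0 -> exists w, Cexp w = P.
Proof.
destruct P as [u v]. intros HP.
assert (Hpos: (0 < u*u+v*v)%R).
{ destruct (Req_dec u 0), (Req_dec v 0); subst; try nra. exfalso; apply HP; reflexivity. }
destruct (angle_ex2 u v Hpos) as [th [l [Hl [Hc Hs]]]].
exists (RtoC (ln (/l)) + Ci * RtoC th). unfold Cexp.
unfold Ci, RtoC, Cplus, Cmult; simpl.
replace (ln (/l) + (0 * th - 1 * 0))%R with (ln (/l)) by ring.
replace (0 + (0 * 0 + 1 * th))%R with th by ring.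
rewrite exp_ln by (apply Rinv_0_lt_compat; auto).
rewrite Hc, Hs. f_equal; field; lra.
Qed.

Lemma Csinh_eq w : Csinh w = (Cexp w - / Cexp w) / 2.
Proof. unfold Csinh. rewrite Cexp_opp. reflexivity. Qed.
Lemma Ccosh_eq w : Ccosh w = (Cexp w + / Cexp w) / 2.
Proof. unfold Ccosh. rewrite Cexp_opp. reflexivity. Qed.

Lemma sinh_of w (p : R) : (p <> 0)%R -> Cexp w = RtoC p -> Csinh w = RtoC ((p - /p)/2).
Proof.
intros Hp H. rewrite Csinh_eq, H.
apply injective_projections; unfold Cdiv, Cminus, Cinv, Cmult, Cplus, Copp, RtoC; simpl; field; lra.
Qed.

Lemma tanh_of w (P : C) (Q k e : R) : Cexp w = P -> P*P = RtoC Q -> (e - k <> 0)%R -> (e + k <> 0)%R ->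
  Q = ((e+k)/(e-k))%R -> arctanh_branch k e w.
Proof.
intros H HP H1 H2 HQ.
assert (Pnz : P <> 0) by (rewrite <- H; apply Cexp_nz).
assert (Hsh: Csinh w = (P*P - 1)/(2*P)) by (rewrite Csinh_eq, H; field; try split; try apply C2_nz; auto).
assert (Hch: Ccosh w = (P*P + 1)/(2*P)) by (rewrite Ccosh_eq, H; field; try split; try apply C2_nz; auto).
unfold arctanh_branch; rewrite Hsh, Hch, HP. split.
- intros He. split.
  + intros Hc.
    assert (E: RtoC Q + 1 = ((RtoC Q + 1)/(2*P))*(2*P)) by (field; try split; try apply C2_nz; auto).
    rewrite Hc, Cmult_0_l in E. apply (f_equal Re) in E. simpl in E.
    rewrite HQ in E. apply He.
    assert (E2: ((e + k) / (e - k) + 1)%R = (2*e/(e-k))%R) by (field; auto).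
    rewrite E2 in E. unfold Rdiv in E. apply Rmult_integral in E. destruct E as [E|E].
    lra. exfalso. apply (Rinv_neq_0_compat (e-k)); auto.
  + replace (RtoC Q - 1) with (RtoC (k/e) * (RtoC Q + 1)).
    field; try split; try apply C2_nz; auto.
    apply injective_projections; unfold Cminus, Cmult, Cplus, Copp, RtoC; simpl; rewrite HQ; field; auto.
- intros He. assert (E: RtoC Q + 1 = 0).
  { apply injective_projections; unfold Cplus, RtoC; simpl; [rewrite HQ, He; rewrite He in H1; field; lra | ring]. }
  rewrite E. unfold Cdiv. apply Cmult_0_l.
Qed.
Open Scope C_scope.
Open Scope R_scope.

Lemma sqrtC_ex (Q : R) : Q <> 0 -> exists P : C, (P * P = RtoC Q)%C.
Proof.
intros HQ. destruct (Rlt_or_le 0 Q) as [H|H].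
- exists (RtoC (sqrt Q)). pose proof (sqrt_sqrt Q).
  apply injective_projections; unfold Cmult, RtoC; simpl; [rewrite H0 by lra|]; ring.
- exists (0, sqrt (-Q))%R. pose proof (sqrt_sqrt (-Q)).
  apply injective_projections; unfold Cmult, RtoC; simpl; [|ring].
  transitivity (- (sqrt (-Q) * sqrt (-Q))). ring. rewrite H0 by lra. ring.
Qed.

Lemma RtoC_nz (p : R) : p <> 0 -> RtoC p <> 0%C.
Proof. intros H E. apply (f_equal Re) in E. simpl in E. auto. Qed.

Lemma main_R (r s t D : R) : r<>0 -> s<>0 -> t<>0 ->
 D = r*r+s*s+t*t-2*r*s-2*s*t-2*r*t ->
 (D < 0 ->
   (exists th1 th2 th3 : R,
      sin th1 = (s-r-t)/(r*t)*(sqrt(-D)/2) /\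
      sin th2 = (r+s-t)/(r*s)*(sqrt(-D)/2) /\
      sin th3 = (s+t-r)/(s*t)*(sqrt(-D)/2) /\ th1 = th2+th3) /\
   (exists ph1 ph2 ph3 : R,
      arctan_branch (sqrt(-D)) (s-r-t) ph1 /\
      arctan_branch (sqrt(-D)) (r+s-t) ph2 /\
      arctan_branch (sqrt(-D)) (s+t-r) ph3 /\ ph1 = ph2+ph3)) /\
 (0 < D ->
   (exists w1 w2 w3 : C,
      arcsinh_branch ((s-r-t)/(r*t)*(sqrt D/2)) w1 /\
      arcsinh_branch ((r+s-t)/(r*s)*(sqrt D/2)) w2 /\
      arcsinh_branch ((s+t-r)/(s*t)*(sqrt D/2)) w3 /\ w1 = (w2+w3)%C) /\
   (exists z1 z2 z3 : C,
      arctanh_branch (sqrt D) (s-r-t) z1 /\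
      arctanh_branch (sqrt D) (r+s-t) z2 /\
      arctanh_branch (sqrt D) (s+t-r) z3 /\ z1 = (z2+z3)%C)).
Proof.
intros Hr Hs Ht HD.
set (e := s-r-t). set (f := r+s-t). set (g := s+t-r).
assert (Hfg: f*g + D = 2*s*e) by (unfold e,f,g; rewrite HD; ring).
assert (Hfg2: f + g = 2*s) by (unfold f,g; ring).
assert (Dff: D = f*f - 4*r*s) by (unfold f; rewrite HD; ring).
assert (Dgg: D = g*g - 4*s*t) by (unfold g; rewrite HD; ring).
assert (Dee: D = e*e - 4*r*t) by (unfold e; rewrite HD; ring).
assert (Iden: forall k, (f/(r*s)*k) * (-(2*s*t - g*g)/(2*s*t)) + (-(2*r*s - f*f)/(2*r*s)) * (g/(s*t)*k) = e/(r*t)*k).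
{ intros k. unfold e,f,g. field. auto. }
split.
- intros HDn. split.
  + set (k := sqrt (-D) / 2).
    assert (kk: k*k = -D/4) by (unfold k; replace (sqrt (- D) / 2 * (sqrt (- D) / 2)) with (sqrt (-D) * sqrt (-D) / 4) by field; rewrite sqrt_sqrt; lra).
    destruct (angle_ex (-(2*r*s - f*f)/(2*r*s)) (f/(r*s)*k)) as [th2 [c2 s2]].
    { replace ((f/(r*s)*k) * (f/(r*s)*k)) with (f*f/(r*s*(r*s))*(k*k)) by (field; auto).
      rewrite kk, Dff. field. auto. }
    destruct (angle_ex (-(2*s*t - g*g)/(2*s*t)) (g/(s*t)*k)) as [th3 [c3 s3]].
    { replace ((g/(s*t)*k) * (g/(s*t)*k)) with (g*g/(s*t*(s*t))*(k*k)) by (field; auto).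
      rewrite kk, Dgg. field. auto. }
    exists (th2+th3), th2, th3. split; [|split; [|split]]; auto.
    rewrite sin_plus, s2, c3, c2, s3. apply Iden.
  + set (k := sqrt (-D)).
    assert (kk: k*k = -D) by (unfold k; rewrite sqrt_sqrt; lra).
    destruct (angle_ex2 f k) as [th2 [l2 [Hl2 [c2 s2]]]]. nra.
    destruct (angle_ex2 g k) as [th3 [l3 [Hl3 [c3 s3]]]]. nra.
    exists (th2+th3), th2, th3. split; [|split; [|split]]; auto.
    * apply (arctan_of _ (l2*l3*(2*s))).
      apply Rmult_integral_contrapositive; split; [nra|lra].
      rewrite cos_plus, c2, c3, s2, s3.
      replace (l2*k*(l3*k)) with (l2*l3*(k*k)) by ring. rewrite kk.
      rewrite Dff in Hfg |- *. transitivity (l2*l3*(f*g + (f*f-4*r*s))); [ring|]. rewrite Hfg. ring.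
      rewrite sin_plus, c2, c3, s2, s3. rewrite <- Hfg2. ring.
    * apply (arctan_of _ l2); auto; lra.
    * apply (arctan_of _ l3); auto; lra.
- intros HDp. split.
  + set (k := sqrt D / 2).
    assert (kk: k*k = D/4) by (unfold k; replace (sqrt D / 2 * (sqrt D / 2)) with (sqrt D * sqrt D / 4) by field; rewrite sqrt_sqrt; lra).
    set (C2 := -(2*r*s - f*f)/(2*r*s)). set (S2 := f/(r*s)*k).
    set (C3 := -(2*s*t - g*g)/(2*s*t)). set (S3 := g/(s*t)*k).
    assert (h2: (C2+S2)*(C2-S2) = 1).
    { replace ((C2+S2)*(C2-S2)) with (C2*C2 - f*f/(r*s*(r*s))*(k*k)) by (unfold C2,S2; field; auto).
      rewrite kk, Dff. unfold C2. field. auto. }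
    assert (h3: (C3+S3)*(C3-S3) = 1).
    { replace ((C3+S3)*(C3-S3)) with (C3*C3 - g*g/(s*t*(s*t))*(k*k)) by (unfold C3,S3; field; auto).
      rewrite kk, Dgg. unfold C3. field. auto. }
    assert (p2nz: C2+S2 <> 0) by (intro E; rewrite E in h2; lra).
    assert (p3nz: C3+S3 <> 0) by (intro E; rewrite E in h3; lra).
    destruct (Cexp_onto (RtoC (C2+S2)) (RtoC_nz _ p2nz)) as [w2 Hw2].
    destruct (Cexp_onto (RtoC (C3+S3)) (RtoC_nz _ p3nz)) as [w3 Hw3].
    exists (w2+w3)%C, w2, w3. split; [|split; [|split]]; auto; unfold arcsinh_branch.
    * rewrite (sinh_of _ ((C2+S2)*(C3+S3))).
      f_equal.
      assert (Hinv: /((C2+S2)*(C3+S3)) = (C2-S2)*(C3-S3)).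
      { apply Rmult_eq_reg_l with ((C2+S2)*(C3+S3)).
        rewrite Rinv_r. replace ((C2 + S2) * (C3 + S3) * ((C2 - S2) * (C3 - S3))) with
          ((C2+S2)*(C2-S2)*((C3+S3)*(C3-S3))) by ring. rewrite h2, h3. ring.
        apply Rmult_integral_contrapositive; auto.
        apply Rmult_integral_contrapositive; auto. }
      rewrite Hinv. rewrite <- (Iden k). fold C2 C3 S2 S3. field.
      apply Rmult_integral_contrapositive; auto.
      rewrite Cexp_add, Hw2, Hw3. rewrite RtoC_mult. reflexivity.
    * rewrite (sinh_of _ (C2+S2)); auto. f_equal.
      replace (/(C2+S2)) with (C2-S2). field.
      apply Rmult_eq_reg_l with (C2+S2); auto. rewrite Rinv_r; auto.
    * rewrite (sinh_of _ (C3+S3)); auto. f_equal.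
      replace (/(C3+S3)) with (C3-S3). field.
      apply Rmult_eq_reg_l with (C3+S3); auto. rewrite Rinv_r; auto.
  + set (k := sqrt D).
    assert (kk: k*k = D) by (unfold k; rewrite sqrt_sqrt; lra).
    assert (He1: e - k <> 0 /\ e + k <> 0).
    { assert ((e-k)*(e+k) = 4*r*t) by (replace ((e-k)*(e+k)) with (e*e - k*k) by ring; rewrite kk, Dee; ring).
      split; intro E; rewrite E in H; [rewrite Rmult_0_l in H|rewrite Rmult_0_r in H];
      symmetry in H; apply Rmult_integral in H; destruct H as [H|H]; try lra;
      apply Rmult_integral in H; destruct H; lra. }
    assert (Hf1: f - k <> 0 /\ f + k <> 0).
    { assert ((f-k)*(f+k) = 4*r*s) by (replace ((f-k)*(f+k)) with (f*f - k*k) by ring; rewrite kk, Dff; ring).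
      split; intro E; rewrite E in H; [rewrite Rmult_0_l in H|rewrite Rmult_0_r in H];
      symmetry in H; apply Rmult_integral in H; destruct H as [H|H]; try lra;
      apply Rmult_integral in H; destruct H; lra. }
    assert (Hg1: g - k <> 0 /\ g + k <> 0).
    { assert ((g-k)*(g+k) = 4*s*t) by (replace ((g-k)*(g+k)) with (g*g - k*k) by ring; rewrite kk, Dgg; ring).
      split; intro E; rewrite E in H; [rewrite Rmult_0_l in H|rewrite Rmult_0_r in H];
      symmetry in H; apply Rmult_integral in H; destruct H as [H|H]; try lra;
      apply Rmult_integral in H; destruct H; lra. }
    destruct He1 as [He1 He2], Hf1 as [Hf1 Hf2], Hg1 as [Hg1 Hg2].
    assert (Q2nz: (f+k)/(f-k) <> 0) by (unfold Rdiv; apply Rmult_integral_contrapositive; split; auto; apply Rinv_neq_0_compat; auto).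
    assert (Q3nz: (g+k)/(g-k) <> 0) by (unfold Rdiv; apply Rmult_integral_contrapositive; split; auto; apply Rinv_neq_0_compat; auto).
    destruct (sqrtC_ex _ Q2nz) as [P2 HP2].
    destruct (sqrtC_ex _ Q3nz) as [P3 HP3].
    assert (P2nz: P2 <> 0%C) by (intro E; rewrite E, Cmult_0_l in HP2; symmetry in HP2; apply (RtoC_nz _ Q2nz); auto).
    assert (P3nz: P3 <> 0%C) by (intro E; rewrite E, Cmult_0_l in HP3; symmetry in HP3; apply (RtoC_nz _ Q3nz); auto).
    destruct (Cexp_onto P2 P2nz) as [w2 Hw2].
    destruct (Cexp_onto P3 P3nz) as [w3 Hw3].
    exists (w2+w3)%C, w2, w3. split; [|split; [|split]]; auto.
    * apply (tanh_of _ (P2*P3) ((f+k)/(f-k)*((g+k)/(g-k)))); auto.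
      rewrite Cexp_add, Hw2, Hw3; reflexivity.
      transitivity ((P2*P2)*(P3*P3))%C. ring. rewrite HP2, HP3, RtoC_mult. reflexivity.
      assert (cross: (e+k)*(f-k)*(g-k) = (e-k)*(f+k)*(g+k)).
      { transitivity ((e-k)*(f+k)*(g+k) + 2*k*(f*g + k*k - 2*s*e) + 2*k*e*(2*s - (f+g))). 
        2:{ rewrite kk, Hfg, Hfg2. ring. }
        ring. }
      transitivity ((e+k)*(f-k)*(g-k)/((e-k)*(f-k)*(g-k))).
      2:{ field; auto. }
      rewrite cross. field; auto.
    * apply (tanh_of _ P2 ((f+k)/(f-k))); auto.
    * apply (tanh_of _ P3 ((g+k)/(g-k))); auto.
Qed.

Lemma disc_Z (a b c x1 y1 x2 y2 : Z) : is_basis x1 y1 x2 y2 ->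
  let r := qform a b c x1 y1 in
  let s := qform a b c x2 y2 in
  let t := qform a b c (- (x1 + x2))%Z (- (y1 + y2))%Z in
  bqf_disc a b c = (r*r+s*s+t*t-2*r*s-2*s*t-2*r*t)%Z.
Proof.
intros Hb r s t. unfold r,s,t,qform,bqf_disc.
assert (Hd: ((x1 * y2 - x2 * y1) * (x1 * y2 - x2 * y1) = 1)%Z) by (destruct Hb as [H|H]; rewrite H; reflexivity).
transitivity ((x1 * y2 - x2 * y1) * (x1 * y2 - x2 * y1) * (b*b - 4*a*c))%Z.
rewrite Hd; ring. ring.
Qed.

Close Scope R_scope.
Close Scope C_scope.

Theorem lemma2 (a b c x1 y1 x2 y2 : Z) :
  is_basis x1 y1 x2 y2 ->
  let r := qform a b c x1 y1 in
  let s := qform a b c x2 y2 in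
  let t := qform a b c (- (x1 + x2))%Z (- (y1 + y2))%Z in
  let D := bqf_disc a b c in
  let e := (s - r - t)%Z in
  let f := (r + s - t)%Z in
  let g := (s + t - r)%Z in
  r <> 0%Z -> s <> 0%Z -> t <> 0%Z ->
  ((D < 0)%Z ->
     (exists th1 th2 th3 : R,
        sin th1 = (IZR e / (IZR r * IZR t) * (sqrt (IZR (- D)) / 2))%R /\
        sin th2 = (IZR f / (IZR r * IZR s) * (sqrt (IZR (- D)) / 2))%R /\
        sin th3 = (IZR g / (IZR s * IZR t) * (sqrt (IZR (- D)) / 2))%R /\
        th1 = (th2 + th3)%R) /\
     (exists ph1 ph2 ph3 : R,
        arctan_branch (sqrt (IZR (- D))) (IZR e) ph1 /\
        arctan_branch (sqrt (IZR (- D))) (IZR f) ph2 /\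
        arctan_branch (sqrt (IZR (- D))) (IZR g) ph3 /\
        ph1 = (ph2 + ph3)%R)) /\
  ((0 < D)%Z ->
     (exists w1 w2 w3 : C,
        arcsinh_branch (IZR e / (IZR r * IZR t) * (sqrt (IZR D) / 2))%R w1 /\
        arcsinh_branch (IZR f / (IZR r * IZR s) * (sqrt (IZR D) / 2))%R w2 /\
        arcsinh_branch (IZR g / (IZR s * IZR t) * (sqrt (IZR D) / 2))%R w3 /\
        w1 = (w2 + w3)%C) /\
     (exists z1 z2 z3 : C,
        arctanh_branch (sqrt (IZR D)) (IZR e) z1 /\
        arctanh_branch (sqrt (IZR D)) (IZR f) z2 /\
        arctanh_branch (sqrt (IZR D)) (IZR g) z3 /\
        z1 = (z2 + z3)%C)).
Proof.
intros Hb. pose proof (disc_Z a b c x1 y1 x2 y2 Hb) as HDz. cbv zeta in HDz |- *.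
set (r := qform a b c x1 y1) in *.
set (s := qform a b c x2 y2) in *.
set (t := qform a b c (- (x1 + x2))%Z (- (y1 + y2))%Z) in *.
set (D := bqf_disc a b c) in *.
intros Hr Hs Ht.
assert (Hr': IZR r <> 0%R) by (intro E; apply Hr; apply eq_IZR; auto).
assert (Hs': IZR s <> 0%R) by (intro E; apply Hs; apply eq_IZR; auto).
assert (Ht': IZR t <> 0%R) by (intro E; apply Ht; apply eq_IZR; auto).
assert (HD: IZR D = (IZR r*IZR r+IZR s*IZR s+IZR t*IZR t-2*IZR r*IZR s-2*IZR s*IZR t-2*IZR r*IZR t)%R).
{ rewrite HDz. rewrite !minus_IZR, !plus_IZR, !mult_IZR. reflexivity. }
destruct (main_R _ _ _ _ Hr' Hs' Ht' HD) as [Neg Pos].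
rewrite !minus_IZR, !plus_IZR, !opp_IZR.
split.
- intros Hn. apply Neg. apply IZR_lt in Hn. exact Hn.
- intros Hp. apply Pos. apply IZR_lt in Hp. exact Hp.
Qed.
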